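(* For every positive integer $\ell$ there exists a bipartite planar graph $G$ such that for every graph $H$ and every path $P$, if $G$ is isomorphic to a subgraph of $H\boxtimes P\boxtimes K_\ell$, then $K_4$ is a $2$-small minor of $H$, and thus $H$ has treewidth at least $3$.
   Context: Graphs are finite and simple. A model of $F$ in $H$ assigns to each $v\in V(F)$ a connected subgraph $\mu(v)$ of $H$, pairwise vertex-disjoint, with $\mu(v)$ and $\mu(w)$ joined by an edge of $H$ whenever $vw\in E(F)$; $F$ is a $2$-small minor of $H$ if such a model exists with $|V(\mu(v))|\le 2$ for all $v$. The strong product $G\boxtimes H$ has vertex set $V(G)\times V(H)$ with $(v,w)\sim(v',w')$ if ($v=v'$ and $ww'\in E(H)$) or ($w=w'$ and $vv'\in E(G)$) or ($vv'\in E(G)$ and $ww'\in E(H)$). *)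

(* Defs.v *)
From Stdlib Require Import Reals.
From mathcomp Require Import all_boot.

Set Implicit Arguments.
Unset Strict Implicit.
Unset Printing Implicit Defensive.

Definition simple_graph (V : finType) (e : rel V) : Prop :=
  symmetric e /\ irreflexive e.

Definition complete (n : nat) : rel 'I_n := fun i j => i != j.
Definition pathg (n : nat) : rel 'I_n :=
  fun i j => (i.+1 == j :> nat) || (j.+1 == i :> nat).

Definition strong (T1 T2 : finType) (e1 : rel T1) (e2 : rel T2) : rel (T1 * T2) :=
  fun x y => [|| (x.1 == y.1) && e2 x.2 y.2,
                 (x.2 == y.2) && e1 x.1 y.1
               | e1 x.1 y.1 && e2 x.2 y.2].

Definition induced (V : finType) (e : rel V) (S : {set V}) : rel V :=
  fun x y => [&& e x y, x \in S & y \in S].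

Definition connected_in (V : finType) (e : rel V) (S : {set V}) : Prop :=
  forall x y, x \in S -> y \in S -> connect (induced e S) x y.

Definition model (VF VH : finType) (eF : rel VF) (eH : rel VH)
  (mu : VF -> {set VH}) : Prop :=
  [/\ (forall v, mu v != set0),
      (forall v, connected_in eH (mu v)),
      (forall v w, v != w -> [disjoint mu v & mu w]) &
      (forall v w, eF v w -> exists x y, [/\ x \in mu v, y \in mu w & eH x y])].

Definition small_minor (k : nat) (VF VH : finType) (eF : rel VF) (eH : rel VH) : Prop :=
  exists mu : VF -> {set VH}, model eF eH mu /\ forall v, #|mu v| <= k.

Definition bipartite (V : finType) (e : rel V) : Prop :=
  exists c : V -> bool, forall x y, e x y -> c x != c y.

(* Arcs are given by maps R -> R*R
   continuous everywhere (only their restriction to [0,1] matters). *)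
Definition plane_embedding (V : finType) (e : rel V)
  (pos : V -> R * R) (g : V -> V -> R -> R * R) : Prop :=
  [/\ injective pos,
      (forall u v, e u v ->
        [/\ (forall t, continuity_pt (fun s => fst (g u v s)) t),
            (forall t, continuity_pt (fun s => snd (g u v s)) t),
            g u v R0 = pos u /\ g u v R1 = pos v,
            (forall s t, (Rle R0 s /\ Rle s R1) -> (Rle R0 t /\ Rle t R1) ->
                g u v s = g u v t -> s = t) &
            (forall w s, (Rlt R0 s /\ Rlt s R1) -> g u v s <> pos w)]) &
      (forall u v u' v', e u v -> e u' v' ->
        ~~ (((u == u') && (v == v')) || ((u == v') && (v == u'))) ->
        forall s t, (Rlt R0 s /\ Rlt s R1) -> (Rle R0 t /\ Rle t R1) -> g u v s <> g u' v' t)].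

Definition planar (V : finType) (e : rel V) : Prop :=
  exists pos g, plane_embedding e pos g.

Definition is_tree (T : finType) (eT : rel T) : Prop :=
  [/\ simple_graph eT, 0 < #|T|, (forall x y, connect eT x y) &
      (forall c : seq T, 3 <= size c -> uniq c -> ~~ cycle eT c)].

Definition tree_decomposition (V : finType) (e : rel V)
  (T : finType) (eT : rel T) (B : T -> {set V}) : Prop :=
  [/\ is_tree eT,
      (forall v, exists t, v \in B t),
      (forall x y, e x y -> exists t, (x \in B t) && (y \in B t)) &
      (forall v, connected_in eT [set t | v \in B t])].

(* treewidth e >= k : every tree decomposition has width >= k,
   i.e. some bag of size >= k+1. *)
Definition treewidth_ge (k : nat) (V : finType) (e : rel V) : Prop :=
  forall (T : finType) (eT : rel T) (B : T -> {set V}),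
    tree_decomposition e eT B -> exists t, k < #|B t|.

(* Main.v *)
Require Import Defs.
From Stdlib Require Import Reals Lra.
From mathcomp Require Import all_boot zify.
Set Implicit Arguments.
Unset Strict Implicit.
Unset Printing Implicit Defensive.

Definition acyclic (T : finType) (eT : rel T) :=
  forall c : seq T, 3 <= size c -> uniq c -> ~~ cycle eT c.

Lemma no_bypass (T : finType) (eT : rel T) u v p :
  acyclic eT -> eT v u -> path eT u p -> last u p = v -> uniq (u :: p) ->
  1 < size p -> False.
Proof.
move=> ac evu pp lp up sp.
have := ac (u :: p) _ up; rewrite /= ltnS => /(_ sp).
by rewrite rcons_path pp lp evu.
Qed.

Lemma core (T : finType) (eT : rel T) u v y rest :
  acyclic eT -> symmetric eT -> eT u v -> path eT u (y :: rest) ->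
  last u (y :: rest) = v -> u \notin (y :: rest) -> y != v -> False.
Proof.
move=> ac sym euv /= /andP[euy pr] /= lr; rewrite inE negb_or => /andP[uy ur] yv.
move: lr; case: (shortenP pr) => p' pp' up' sub lp'.
apply: (@no_bypass _ eT u v (y :: p')) => //.
- by rewrite sym.
- by rewrite /= euy.
- rewrite /= in up' *; rewrite inE negb_or uy up' andbT /=.
  by apply/negP => /sub; apply/negP.
- by case: p' lp' {pp' up' sub} => [/= yv'|]; [rewrite yv' eqxx in yv|].
Qed.

Lemma ind_path (T : finType) (e : rel T) (S : {set T}) x p :
  path (induced e S) x p -> path e x p && all (fun z => z \in S) p.
Proof.
elim: p x => //= y p IH x /andP[/and3P[exy _ yS] /IH /andP[-> ->]].
by rewrite exy yS.
Qed.

Lemma connect_ind (T : finType) (e : rel T) (S : {set T}) x y :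
  connect (induced e S) x y ->
  exists p, [/\ path e x p, last x p = y & all (fun z => z \in S) p].
Proof.
by case/connectP => p /ind_path /andP[pp ap] ->; exists p.
Qed.

Lemma connect_ind_mem (T : finType) (e : rel T) (S : {set T}) x y :
  connect (induced e S) x y -> x \in S -> y \in S.
Proof.
case/connect_ind => p [_ <- ap] xS.
elim: p x xS ap => //= z p IH x _ /andP[zS]; exact: IH.
Qed.

Lemma connect_ind_sub (T : finType) (e : rel T) (S S' : {set T}) x y :
  S \subset S' -> connect (induced e S) x y -> connect (induced e S') x y.
Proof.
move=> sub; apply: connect_sub => a b /and3P[eab aS bS].
by apply: connect1; rewrite /induced eab !(subsetP sub).
Qed.

Lemma induced_sym (T : finType) (e : rel T) (S : {set T}) :
  symmetric e -> symmetric (induced e S).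
Proof. by move=> sym a b; rewrite /induced sym; case: (a \in S); case: (b \in S). Qed.

Lemma path_connect_ind (T : finType) (e : rel T) (S : {set T}) x p :
  x \in S -> path e x p -> all (fun z => z \in S) p ->
  connect (induced e S) x (last x p).
Proof.
elim: p x => [|y p IH] x xS /=; first by rewrite connect0.
move=> /andP[exy pp] /andP[yS ap].
apply: connect_trans (IH y yS pp ap).
by apply: connect1; rewrite /induced exy xS yS.
Qed.

Lemma first_entry (T : finType) (e : rel T) (P : pred T) x p :
  path e x p -> ~~ P x -> P (last x p) ->
  exists v u q, [/\ path e x q, last x q = v, all (fun z => ~~ P z) q,
                 ~~ P v & e v u && P u].
Proof.
elim: p x => [|y p IH] x /=; first by move=> _ /negPf->.
move=> /andP[exy pp] nPx lP.
case Py: (P y).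
  by exists x, y, [::]; rewrite /= exy Py nPx.
have [v [u [q [pq lq aq nPv evu]]]] := IH y pp (negbT Py) lP.
by exists v, u, (y :: q); rewrite /= exy pq lq Py aq.
Qed.

Lemma last_exit (T : finType) (e : rel T) (P : pred T) x p :
  path e x p -> P x -> ~~ P (last x p) ->
  exists v u q, [/\ v \in x :: p, P v, e v u, ~~ P u & [/\ path e u q,
                 last u q = last x p & all (fun z => ~~ P z) q]].
Proof.
move=> pp Px nPl.
suff: all (fun z => ~~ P z) (x :: p) \/
  exists v u q, [/\ v \in x :: p, P v, e v u, ~~ P u & [/\ path e u q,
                 last u q = last x p & all (fun z => ~~ P z) q]].
  by case=> //= /andP[]; rewrite Px.
elim: p x pp {Px} nPl => [|y p IH] x /=; first by move=> _ ->; left.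
move=> /andP[exy pp] nPl.
case: (IH y pp nPl) => [ay|].
  have [Px|nPx] := boolP (P x); last by left; apply/andP; split.
  right; exists x, y, p; rewrite mem_head Px exy.
  by move: ay => /= /andP[-> ->].
move=> [v [u [q [vin Pv evu nPu [pq lq aq]]]]].
by right; exists v, u, q; rewrite inE vin orbT.
Qed.

Lemma helly3 (T : finType) (eT : rel T) (S1 S2 S3 : {set T}) a b c :
  acyclic eT -> symmetric eT ->
  connected_in eT S1 -> connected_in eT S2 -> connected_in eT S3 ->
  a \in S2 -> a \in S3 -> b \in S1 -> b \in S3 -> c \in S1 -> c \in S2 ->
  exists t, [&& t \in S1, t \in S2 & t \in S3].
Proof.
move=> ac sym C1 C2 C3 a2 a3 b1 b3 c1 c2.
case/boolP: [exists t, [&& t \in S1, t \in S2 & t \in S3]].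
  by case/existsP=> t Ht; exists t.
move/existsPn=> no; exfalso.
have no' t : t \in S1 -> t \in S2 -> t \in S3 -> False.
  by move=> h1 h2 h3; move: (no t); rewrite h1 h2 h3.
have b2 : b \notin S2 by apply/negP => h; apply: (no' b).
case/connectP: (C3 b a b3 a3) => p pp lp.
have [v0 [u0 [q [pq lq aq nv0 /andP[/and3P[ev0u0 v03 u03] u02]]]]] :=
  @first_entry _ _ (fun z => z \in S2) b p pp b2 ltac:(by rewrite -lp).
case/connectP: (C2 u0 c u02 c2) => pr ppr lpr.
move: lpr; case: (shortenP ppr) => p1 pp1 up1 _ lp1.
case/connectP: (C1 c b c1 b1) => p2 pp2 lp2.
move: (ind_path pp1) (ind_path pp2) (ind_path pq) => /andP[ep1 ap1] /andP[ep2 ap2] /andP[eq aq'].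
case: p1 pp1 up1 lp1 ep1 ap1 => [/= _ _ ceq _ _|y r pp1 up1 lp1 ep1 ap1].
  by apply: (no' u0) => //; rewrite -ceq.
apply: (@core _ eT u0 v0 y (r ++ p2 ++ q)) => //.
- by rewrite sym.
- by rewrite -cat_cons !cat_path ep1 -lp1 ep2 -lp2 eq.
- by rewrite -cat_cons !last_cat -lp1 -lp2 lq.
- rewrite -cat_cons !mem_cat negb_or; apply/andP; split.
    by move: up1; rewrite cons_uniq => /andP[].
  rewrite negb_or; apply/andP; split.
    by apply/negP => /(allP ap2) h; apply: (no' u0).
  by apply/negP => /(allP aq) /=; rewrite u02.
- apply/negP => /eqP yv; move: ap1 => /= /andP[]; by rewrite yv (negPf nv0).
Qed.

Lemma inter_conn (T : finType) (eT : rel T) (S S' : {set T}) :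
  acyclic eT -> symmetric eT ->
  connected_in eT S -> connected_in eT S' -> connected_in eT (S :&: S').
Proof.
move=> ac sym CS CS' x y xI yI.
case/boolP: (connect (induced eT (S :&: S')) x y) => // ny; exfalso.
set I := S :&: S' in xI yI ny *.
have symI := induced_sym I sym.
have cs := sym_connect_sym symI.
pose P := fun z => connect (induced eT I) x z.
have PI z : P z -> z \in I by move/connect_ind_mem; apply.
move: (xI) (yI); rewrite !inE => /andP[xS xS'] /andP[yS yS'].
case/connectP: (CS y x yS xS) => p pp lp.
have [v [u [q [pq lq aq nPv /andP[/and3P[evu vS uS] Pu]]]]] :=
  @first_entry _ _ P y p pp ny ltac:(by rewrite -lp /P connect0).
case/connectP: (CS' x y xS' yS') => p' pp' lp'.
have [v' [u' [q' [_ Pv' /and3P[ev'u' _ u'S'] nPu' [pq' lq' aq']]]]] :=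
  @last_exit _ _ P x p' pp' (connect0 _ _) ltac:(by rewrite -lp').
have vS' : v \notin S'.
  apply/negP => vS'; move: nPv => /negP; apply.
  apply: (connect_trans Pu); apply: connect1.
  by rewrite /induced sym evu (PI _ Pu) inE vS vS'.
have cuv' : connect (induced eT I) u v'.
  by apply: connect_trans (Pv'); rewrite cs.
case/connectP: cuv' => pc ppc lpc.
move: lpc; case: (shortenP ppc) => p1 pp1 up1 _ lp1.
move: (ind_path pp1) (ind_path pq) (ind_path pq') => /andP[ep1 ap1] /andP[eq _] /andP[eq' _].
have uC : u \notin (u' :: q') ++ q.
  rewrite mem_cat negb_or; apply/andP; split.
    rewrite inE negb_or; apply/andP; split.
      by apply/negP => /eqP ?; subst u'; rewrite Pu in nPu'.
    by apply/negP => /(allP aq') /negP; apply.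
  by apply/negP => /(allP aq) /negP; apply.
have lastW : last u' (q' ++ q) = v by rewrite last_cat lq' -lp' lq.
case: p1 pp1 up1 lp1 ep1 ap1 => [/= _ _ lp1 _ _|y1 r _ up1 lp1 ep1 ap1].
  subst v'.
  apply: (@core _ eT u v u' (q' ++ q)) => //.
  - by rewrite sym.
  - by rewrite /= ev'u' cat_path eq' lq' -lp' eq.
  - apply/negP => /eqP ?; subst u'; by rewrite u'S' in vS'.
have E : y1 :: r ++ u' :: q' ++ q = (y1 :: r) ++ (u' :: q' ++ q) by [].
apply: (@core _ eT u v y1 (r ++ u' :: q' ++ q)) => //.
- by rewrite sym.
- by rewrite E cat_path ep1 -lp1 /= ev'u' cat_path eq' lq' -lp' eq.
- by rewrite E last_cat /= lastW.
- rewrite E mem_cat negb_or; apply/andP; split.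
    by move: up1; rewrite cons_uniq => /andP[].
  exact: uC.
- apply/negP => /eqP ?; subst y1; move: ap1 => /= /andP[].
  by rewrite inE (negPf vS') andbF.
Qed.

Lemma union_conn (T : finType) (eT : rel T) (S S' : {set T}) t :
  connected_in eT S -> connected_in eT S' -> t \in S -> t \in S' ->
  connected_in eT (S :|: S').
Proof.
move=> CS CS' tS tS'.
have sub1 : S \subset S :|: S' by apply: subsetUl.
have sub2 : S' \subset S :|: S' by apply: subsetUr.
have toT z : z \in S :|: S' -> connect (induced eT (S :|: S')) z t.
  rewrite inE => /orP[] zS.
    exact: connect_ind_sub sub1 (CS z t zS tS).
  exact: connect_ind_sub sub2 (CS' z t zS tS').
have fromT z : z \in S :|: S' -> connect (induced eT (S :|: S')) t z.
  rewrite inE => /orP[] zS.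
    exact: connect_ind_sub sub1 (CS t z tS zS).
  exact: connect_ind_sub sub2 (CS' t z tS' zS).
by move=> x y xU yU; apply: connect_trans (toT x xU) (fromT y yU).
Qed.

Lemma helly4 (T : finType) (eT : rel T) (S1 S2 S3 S4 : {set T}) :
  acyclic eT -> symmetric eT ->
  connected_in eT S1 -> connected_in eT S2 -> connected_in eT S3 ->
  connected_in eT S4 ->
  (exists t, (t \in S1) && (t \in S2)) -> (exists t, (t \in S1) && (t \in S3)) ->
  (exists t, (t \in S1) && (t \in S4)) -> (exists t, (t \in S2) && (t \in S3)) ->
  (exists t, (t \in S2) && (t \in S4)) -> (exists t, (t \in S3) && (t \in S4)) ->
  exists t, [&& t \in S1, t \in S2, t \in S3 & t \in S4].
Proof.
move=> ac sym C1 C2 C3 C4 [a12 /andP[? ?]] [a13 /andP[? ?]] [a14 /andP[? ?]]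
  [a23 /andP[? ?]] [a24 /andP[? ?]] [a34 /andP[? ?]].
have [t124 /and3P[? ? ?]] := @helly3 _ _ S1 S2 S4 a24 a14 a12 ac sym C1 C2 C4
  ltac:(done) ltac:(done) ltac:(done) ltac:(done) ltac:(done) ltac:(done).
have [t134 /and3P[? ? ?]] := @helly3 _ _ S1 S3 S4 a34 a14 a13 ac sym C1 C3 C4
  ltac:(done) ltac:(done) ltac:(done) ltac:(done) ltac:(done) ltac:(done).
have [t234 /and3P[? ? ?]] := @helly3 _ _ S2 S3 S4 a34 a24 a23 ac sym C2 C3 C4
  ltac:(done) ltac:(done) ltac:(done) ltac:(done) ltac:(done) ltac:(done).
have [t /and3P[]] := @helly3 _ _ (S1 :&: S4) (S2 :&: S4) (S3 :&: S4) t234 t134 t124 ac sym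
  (inter_conn ac sym C1 C4) (inter_conn ac sym C2 C4) (inter_conn ac sym C3 C4)
  ltac:(by rewrite inE; apply/andP) ltac:(by rewrite inE; apply/andP)
  ltac:(by rewrite inE; apply/andP) ltac:(by rewrite inE; apply/andP)
  ltac:(by rewrite inE; apply/andP) ltac:(by rewrite inE; apply/andP).
move=> h1 h2 h3; exists t; move: h1 h2 h3.
by rewrite !inE => /andP[-> ->] /andP[-> _] /andP[-> _].
Qed.

Lemma bagset_conn (VH : finType) (eH : rel VH) (T : finType) (eT : rel T)
  (B : T -> {set VH}) (X : {set VH}) :
  tree_decomposition eH eT B -> connected_in eH X ->
  connected_in eT [set t | [exists x, (x \in X) && (x \in B t)]].
Proof.
case=> _ _ edges sub CX.
set TX := [set t | _].
have subx x : x \in X -> [set t | x \in B t] \subset TX.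
  move=> xX; apply/subsetP => t; rewrite !inE => xt.
  by apply/existsP; exists x; rewrite xX.
move=> t1 t2; rewrite !inE => /existsP[x1 /andP[x1X x1t]] /existsP[x2 /andP[x2X x2t]].
case/connectP: (CX x1 x2 x1X x2X) => p pp lp.
elim: p x1 t1 x1X x1t pp lp => [|y p IH] x1 t1 x1X x1t /=.
  move=> _ ?; subst x2.
  apply: connect_ind_sub (subx x1 x1X) _.
  by apply: sub; rewrite inE.
move=> /andP[/and3P[exy _ yX] pp] lp.
have [s /andP[xs ys]] := edges x1 y exy.
apply: (@connect_trans _ _ s).
  by apply: connect_ind_sub (subx x1 x1X) _; apply: sub; rewrite inE.
exact: (IH y s yX ys pp lp).
Qed.

Lemma tw_of_K4 (VH : finType) (eH : rel VH) :
  small_minor 2 (@complete 4) eH -> treewidth_ge 3 eH.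
Proof.
case=> mu [[ne conn disj adj] _] T eT B D.
have D' := D.
case: D' => [[[symT _] _ _ ac] cover edges sub].
pose Tv (v : 'I_4) := [set t | [exists x, (x \in mu v) && (x \in B t)]].
have Cv v : connected_in eT (Tv v) by apply: (bagset_conn D (conn v)).
have meet (v w : 'I_4) : v != w -> exists t, (t \in Tv v) && (t \in Tv w).
  move=> vw; have [x [y [xv yw exy]]] := adj v w vw.
  have [t /andP[xt yt]] := edges x y exy.
  exists t; rewrite !inE; apply/andP; split; apply/existsP.
    by exists x; rewrite xv xt.
  by exists y; rewrite yw yt.
pose o0 := @Ordinal 4 0 isT; pose o1 := @Ordinal 4 1 isT.
pose o2 := @Ordinal 4 2 isT; pose o3 := @Ordinal 4 3 isT.
have [t /and4P[t0 t1 t2 t3]] := @helly4 _ eT (Tv o0) (Tv o1) (Tv o2) (Tv o3) ac symT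
  (Cv _) (Cv _) (Cv _) (Cv _) (meet o0 o1 isT) (meet o0 o2 isT) (meet o0 o3 isT)
  (meet o1 o2 isT) (meet o1 o3 isT) (meet o2 o3 isT).
exists t.
have all_i : forall i : 'I_4, exists x, (x \in mu i) && (x \in B t).
  move=> i; have : t \in Tv i.
    case: i => [[|[|[|[|i]]]] Hi] //.
    - by rewrite (bool_irrelevance Hi isT).
    - by rewrite (bool_irrelevance Hi isT).
    - by rewrite (bool_irrelevance Hi isT).
    - by rewrite (bool_irrelevance Hi isT).
  by rewrite inE => /existsP.
have [g Hg] := fin_all_exists all_i.
have ginj : injective g.
  move=> i j gij; apply/eqP; apply/negPn/negP => ij.
  move: (Hg i) (Hg j) => /andP[gi _] /andP[gj _].
  by move: (disjointFr (disj _ _ ij) gi); rewrite gij gj.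
have : #|[set g i | i : 'I_4]| <= #|B t|.
  apply: subset_leq_card; apply/subsetP => x /imsetP[i _ ->].
  by case/andP: (Hg i).
by rewrite card_imset // card_ord.
Qed.

Lemma disj_of (T : finType) (A B : {set T}) :
  (forall x, x \in A -> x \notin B) -> [disjoint A & B].
Proof.
move=> h; apply/pred0P => x /=; case xA: (x \in A) => //=; apply/negbTE; exact: h.
Qed.

Lemma conn_pair (T : finType) (e : rel T) (c c' : T) :
  symmetric e -> (c = c' \/ e c c') -> connected_in e [set c; c'].
Proof.
move=> sym h x y; rewrite !inE => /orP[]/eqP-> /orP[]/eqP->; rewrite ?connect0 //.
  case: h => [->|h]; first by rewrite connect0.
  by apply: connect1; rewrite /induced h !inE !eqxx ?orbT.
case: h => [->|h]; first by rewrite connect0.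
by apply: connect1; rewrite /induced sym h !inE !eqxx ?orbT.
Qed.

Lemma conn_single (T : finType) (e : rel T) (a : T) : connected_in e [set a].
Proof. by move=> x y; rewrite !inE => /eqP-> /eqP->; rewrite connect0. Qed.

Lemma adj_of (T : finType) (e : rel T) (A B : {set T}) x y :
  x \in A -> y \in B -> e x y -> exists x y, [/\ x \in A, y \in B & e x y].
Proof. by move=> *; exists x, y. Qed.

Lemma k4_build (VH : finType) (eH : rel VH) (a b c c' d d' : VH) :
  symmetric eH -> (c = c' \/ eH c c') -> eH d d' ->
  a != b -> a != c -> a != c' -> a != d -> a != d' ->
  b != c -> b != c' -> b != d -> b != d' ->
  c != d -> c != d' -> c' != d -> c' != d' ->
  eH a b -> eH a c || eH a c' -> eH a d || eH a d' ->
  eH b c || eH b c' -> eH b d || eH b d' ->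
  [|| eH c d, eH c d', eH c' d | eH c' d'] ->
  small_minor 2 (@complete 4) eH.
Proof.
move=> sym hc hd ab ac ac' ad ad' bc bc' bd bd' cd cd' c'd c'd'
  eab eac ead ebc ebd ecd.
have ba : b != a by rewrite eq_sym.
have ca : c != a by rewrite eq_sym.
have c'a : c' != a by rewrite eq_sym.
have da : d != a by rewrite eq_sym.
have d'a : d' != a by rewrite eq_sym.
have cb : c != b by rewrite eq_sym.
have c'b : c' != b by rewrite eq_sym.
have db : d != b by rewrite eq_sym.
have d'b : d' != b by rewrite eq_sym.
have dc : d != c by rewrite eq_sym.
have d'c : d' != c by rewrite eq_sym.
have dc' : d != c' by rewrite eq_sym.
have d'c' : d' != c' by rewrite eq_sym.
pose F (i : nat) := match i with
  | 0 => [set a] | 1 => [set b] | 2 => [set c; c'] | _ => [set d; d'] end.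
exists (fun i : 'I_4 => F (val i)); split; last first.
  move=> [[|[|[|[|i]]]] Hi] //=; by rewrite ?cards1 ?cards2 ?ltnS ?leq_b1.
split.
- move=> [[|[|[|[|i]]]] Hi] //=; apply/set0Pn;
    [exists a | exists b | exists c | exists d]; by rewrite !inE eqxx.
- move=> [[|[|[|[|i]]]] Hi] //=.
  + exact: conn_single.
  + exact: conn_single.
  + exact: conn_pair.
  + by apply: conn_pair => //; right.
- move=> [[|[|[|[|i]]]] Hi] [[|[|[|[|j]]]] Hj] //= _; apply: disj_of => x;
  rewrite !inE; (repeat case/orP); move=> /eqP->;
  by rewrite ?(negPf ab, negPf ac, negPf ac', negPf ad, negPf ad', negPf bc,
    negPf bc', negPf bd, negPf bd', negPf cd, negPf cd', negPf c'd, negPf c'd',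
    negPf ba, negPf ca, negPf c'a, negPf da, negPf d'a, negPf cb, negPf c'b,
    negPf db, negPf d'b, negPf dc, negPf d'c, negPf dc', negPf d'c').
- move=> [[|[|[|[|i]]]] Hi] [[|[|[|[|j]]]] Hj] //= _.
  + by apply: (adj_of (x := a) (y := b)); rewrite ?inE ?eqxx.
  + by case/orP: eac => h; [apply: (adj_of (x := a) (y := c)) | apply: (adj_of (x := a) (y := c'))]; rewrite ?inE ?eqxx ?orbT.
  + by case/orP: ead => h; [apply: (adj_of (x := a) (y := d)) | apply: (adj_of (x := a) (y := d'))]; rewrite ?inE ?eqxx ?orbT.
  + by apply: (adj_of (x := b) (y := a)); rewrite ?inE ?eqxx // sym.
  + by case/orP: ebc => h; [apply: (adj_of (x := b) (y := c)) | apply: (adj_of (x := b) (y := c'))]; rewrite ?inE ?eqxx ?orbT.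
  + by case/orP: ebd => h; [apply: (adj_of (x := b) (y := d)) | apply: (adj_of (x := b) (y := d'))]; rewrite ?inE ?eqxx ?orbT.
  + by case/orP: eac => h; [apply: (adj_of (x := c) (y := a)) | apply: (adj_of (x := c') (y := a))]; rewrite ?inE ?eqxx ?orbT // sym.
  + by case/orP: ebc => h; [apply: (adj_of (x := c) (y := b)) | apply: (adj_of (x := c') (y := b))]; rewrite ?inE ?eqxx ?orbT // sym.
  + by case/or4P: ecd => h; [apply: (adj_of (x := c) (y := d)) | apply: (adj_of (x := c) (y := d')) | apply: (adj_of (x := c') (y := d)) | apply: (adj_of (x := c') (y := d'))]; rewrite ?inE ?eqxx ?orbT.
  + by case/orP: ead => h; [apply: (adj_of (x := d) (y := a)) | apply: (adj_of (x := d') (y := a))]; rewrite ?inE ?eqxx ?orbT // sym.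
  + by case/orP: ebd => h; [apply: (adj_of (x := d) (y := b)) | apply: (adj_of (x := d') (y := b))]; rewrite ?inE ?eqxx ?orbT // sym.
  + by case/or4P: ecd => h; [apply: (adj_of (x := d) (y := c)) | apply: (adj_of (x := d') (y := c)) | apply: (adj_of (x := d) (y := c')) | apply: (adj_of (x := d') (y := c'))]; rewrite ?inE ?eqxx ?orbT // sym.
Qed.

Section RealsE.
Local Open Scope R_scope.

Inductive Ed := EX of nat | EY of nat & nat | EL of nat.

Definition segc (Q : nat) (c : Ed) (s : R) : R * R :=
  match c with
  | EX p => (s * INR p, s)
  | EY j p => (INR (j * Q)%N + s * (INR p - INR (j * Q)%N), 2 - s)
  | EL p => (INR p + s, 1)
  end.

Definition validE (Q : nat) (c : Ed) : Prop :=
  match c with EY j p => (j * Q <= p < j * Q + Q)%N | _ => True end.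

Lemma no_int_between (p q : nat) (s : R) :
  (0 < s < 1) -> (INR p + s) = INR q -> False.
Proof.
move=> hs h.
case: (leqP q p) => [/leP/le_INR|/leP/le_INR]; rewrite ?S_INR; lra.
Qed.

Lemma EL_EL (p q : nat) (s t : R) :
  (0 < s < 1) -> (0 <= t <= 1) -> (INR p + s) = (INR q + t) -> p = q.
Proof.
move=> hs ht h.
case: (ltngtP p q) => // [/leP/le_INR|/leP/le_INR]; rewrite ?S_INR; lra.
Qed.

Lemma INR_mulQ (j Q : nat) : INR (j * Q)%N = (INR j * INR Q).
Proof. by rewrite -mult_INR. Qed.

Lemma seg_disj Q c c' s t :
  (0 < Q)%N -> validE Q c -> validE Q c' ->
  (0 < s < 1) -> (0 <= t <= 1) -> segc Q c s = segc Q c' t -> c = c'.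
Proof.
move=> Q0 vc vc' hs ht.
case: c vc => [p|j p|p] vc; case: c' vc' => [q|j' q|q] vc' /= /pair_equal_spec [h1 h2]; try lra.
- subst t; congr EX; apply: INR_eq.
  apply: (Rmult_eq_reg_l s) => //; lra.
- have ? : t = s by lra.
  subst t.
  case/andP: vc => /leP/le_INR h3 /leP/le_INR h4.
  case/andP: vc' => /leP/le_INR h5 /leP/le_INR h6.
  rewrite plus_INR S_INR in h4; rewrite plus_INR S_INR in h6.
  case: (ltngtP j j') => hj.
  + have : (j.+1 * Q <= j' * Q)%N by rewrite leq_mul2r hj orbT.
    move/leP/le_INR; rewrite mulSn plus_INR => h7.
    have : (s * (INR p - INR (j * Q)%N) <= INR p - INR (j * Q)%N).
      rewrite -{2}(Rmult_1_l (_ - _)); apply: Rmult_le_compat_r; lra.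
    have : (0 <= s * (INR q - INR (j' * Q)%N)).
      apply: Rmult_le_pos; lra.
    lra.
  + have : (j'.+1 * Q <= j * Q)%N by rewrite leq_mul2r hj orbT.
    move/leP/le_INR; rewrite mulSn plus_INR => h7.
    have : (s * (INR q - INR (j' * Q)%N) <= INR q - INR (j' * Q)%N).
      rewrite -{2}(Rmult_1_l (_ - _)); apply: Rmult_le_compat_r; lra.
    have : (0 <= s * (INR p - INR (j * Q)%N)).
      apply: Rmult_le_pos; lra.
    lra.
  + subst j'; congr EY; apply: INR_eq.
    have : (s * (INR p - INR (j * Q)%N) = s * (INR q - INR (j * Q)%N)) by lra.
    move/(Rmult_eq_reg_l s) => h; have := h ltac:(lra); lra.
- subst t; exfalso; apply: (@no_int_between p q s) => //; lra.
- have ? : t = 1 by lra.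
  subst t; exfalso; apply: (@no_int_between p q s) => //; lra.
- by congr EL; apply: (EL_EL hs ht).
Qed.

End RealsE.

Definition Kn (l : nat) := 5 * l.
Definition Mn l := (Kn l).+1.
Definition Pn l := ((Kn l).+1).*2.
Definition Un l := (Kn l).*2.+1.
Definition Qn l := Un l * Pn l.
Definition Tn l := Mn l * Qn l.
Definition VG l : finType := (option 'I_(Mn l) + 'I_(Tn l).+1)%type.

Definition eG l : rel (VG l) := fun a b =>
  match a, b with
  | inl None, inr p => ~~ odd p
  | inr p, inl None => ~~ odd p
  | inl (Some j), inr p => ~~ odd p && (p %/ Qn l == j)
  | inr p, inl (Some j) => ~~ odd p && (p %/ Qn l == j)
  | inr p, inr q => (p.+1 == q) || (q.+1 == p)
  | _, _ => false
  end.

Lemma Qn_gt0 l : 0 < Qn l.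
Proof. by rewrite /Qn /Un /Pn muln_gt0 /= doubleS. Qed.

Lemma eG_simple l : simple_graph (@eG l).
Proof.
split.
  by move=> [[j|]|p] [[j'|]|q] //=; rewrite orbC.
move=> [[j|]|p] //=; apply/negP => /orP[] /eqP; lia.
Qed.

Lemma eG_bip l : bipartite (@eG l).
Proof.
exists (fun v : VG l => match v with inl _ => false | inr p => ~~ odd p end).
move=> [[j|]|p] [[j'|]|q] //=.
all: try (case/andP => h _); try (case/orP => /eqP hh); rewrite -?hh /= ?negbK //.
all: try (by case: (odd _)).
all: by rewrite ?h.
Qed.

Section Planar.
Local Open Scope R_scope.

Definition pos l (v : VG l) : R * R :=
  match v with
  | inl None => (0, 0)
  | inl (Some j) => (INR (j * Qn l)%N, 2)
  | inr p => (INR p, 1)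
  end.

Definition gg l (u v : VG l) (s : R) : R * R :=
  (fst (pos u) + s * (fst (pos v) - fst (pos u)),
   snd (pos u) + s * (snd (pos v) - snd (pos u))).

Definition canon l (u v : VG l) : Ed :=
  match u, v with
  | inl None, inr p => EX p
  | inr p, inl None => EX p
  | inl (Some j), inr p => EY j p
  | inr p, inl (Some j) => EY j p
  | inr p, inr q => EL (minn p q)
  | _, _ => EX 0
  end.

Lemma orient l (u v : VG l) : eG u v ->
  (forall s, gg u v s = segc (Qn l) (canon u v) s) \/
  (forall s, gg u v s = segc (Qn l) (canon u v) (1 - s)).
Proof.
case: u => [[j|]|p]; case: v => [[j'|]|q] //= h.
- left => s; rewrite /gg /=; f_equal; ring.
- left => s; rewrite /gg /=; f_equal; ring.
- right => s; rewrite /gg /=; f_equal; ring.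
- right => s; rewrite /gg /=; f_equal; ring.
- case/orP: h => /eqP hq.
    have -> : minn p q = p by lia.
    left => s; rewrite /gg /= -hq S_INR; f_equal; ring.
  have -> : minn p q = q by lia.
  right => s; rewrite /gg /= -hq S_INR; f_equal; ring.
Qed.

Lemma canon_valid l (u v : VG l) : eG u v -> validE (Qn l) (canon u v).
Proof.
have Q0 := Qn_gt0 l.
have key (j : 'I_(Mn l)) (p : nat) : p %/ Qn l == j -> (j * Qn l <= p < j * Qn l + Qn l)%N.
  move=> /eqP <-; rewrite leq_divM /= -mulSnr; exact: ltn_ceil.
case: u => [[j|]|p]; case: v => [[j'|]|q] //= h.
  by apply: key; case/andP: h.
by apply: key; case/andP: h.
Qed.

Lemma eq_inr (A B : eqType) (x y : B) : (@inr A B x == inr y) = (x == y).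
Proof. by apply/eqP/eqP => [[]|->]. Qed.

Lemma eq_inlS (A : eqType) (B : eqType) (x y : A) :
  (@inl (option A) B (Some x) == inl (Some y)) = (x == y).
Proof. by apply/eqP/eqP => [[]|->]. Qed.

Lemma canon_inj l (u v u' v' : VG l) : eG u v -> eG u' v' ->
  canon u v = canon u' v' -> (u == u') && (v == v') || (u == v') && (v == u').
Proof.
case: u => [[j|]|p]; case: v => [[k|]|q] //=;
case: u' => [[j'|]|p']; case: v' => [[k'|]|q'] //= h h' e;
rewrite ?eq_inr ?eq_inlS ?eqxx -?val_eqE /=; case: e => *;
  try (move: h h'; clear; lia); try lia.
Qed.

Lemma novert l c (w : VG l) s : 0 < s < 1 -> segc (Qn l) c s <> pos w.
Proof.
move=> hs.
case: c => [p|j p|p]; case: w => [[j'|]|r] /= /pair_equal_spec [h1 h2]; try lra.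
exact: (no_int_between hs h1).
Qed.

Lemma pos_inj l : injective (@pos l).
Proof.
have Q0 := Qn_gt0 l.
case=> [[j|]|p]; case=> [[j'|]|q] /= /pair_equal_spec [h1 h2]; try lra.
- move/INR_eq: h1 => /eqP; rewrite eqn_pmul2r // => /eqP h.
  by congr (inl (Some _)); apply: val_inj.
- done.
- by move/INR_eq: h1 => h; congr inr; apply: val_inj.
Qed.

Lemma G_planar l : planar (@eG l).
Proof.
have Q0 := Qn_gt0 l.
have [symG irrG] := eG_simple l.
exists (@pos l), (@gg l); split.
- exact: pos_inj.
- move=> u v e; split.
  + by move=> t; rewrite /gg /=; reg.
  + by move=> t; rewrite /gg /=; reg.
  + rewrite /gg; case: (pos u) => a b; case: (pos v) => c d /=.
    by split; f_equal; ring.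
  + move=> s t _ _ /pair_equal_spec [h1 h2].
    case: (Req_dec s t) => // hst; exfalso.
    have e1 : (s - t) * (fst (pos v) - fst (pos u)) = 0 by nra.
    have e2 : (s - t) * (snd (pos v) - snd (pos u)) = 0 by nra.
    have hst' : s - t <> 0 by lra.
    case: (Rmult_integral _ _ e1) => // e1'.
    case: (Rmult_integral _ _ e2) => // e2'.
    have : pos u = pos v.
      by move: e1' e2'; case: (pos u) => a b; case: (pos v) => c d /= *; f_equal; lra.
    by move/pos_inj => uv; move: e; rewrite uv irrG.
  + move=> w s hs; case: (orient e) => ->; apply: novert; lra.
- move=> u v u' v' e e' nsame s t hs ht heq.
  move/negP: nsame; apply.
  apply: canon_inj => //.
  have v1 := canon_valid e; have v2 := canon_valid e'.
  case: (orient e) => h1 in heq; case: (orient e') => h2 in heq;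
  rewrite h1 h2 in heq; apply: (seg_disj Q0 v1 v2 _ _ heq); lra.
Qed.

End Planar.

Lemma Qn_even l : odd (Qn l) = false.
Proof. by rewrite /Qn oddM /Pn odd_double andbF. Qed.

Lemma Pn_even l : odd (Pn l) = false.
Proof. by rewrite /Pn odd_double. Qed.

Lemma Pn_gt0 l : 0 < Pn l.
Proof. by rewrite /Pn doubleS. Qed.

Definition Lp l (r : nat) : VG l := inr (inord r).
Definition Xv l : VG l := inl None.
Definition Yv l (j : 'I_(Mn l)) : VG l := inl (Some j).

Lemma Lval l r : r <= Tn l -> (inord r : 'I_(Tn l).+1) = r :> nat.
Proof. by move=> h; rewrite inordK. Qed.

Lemma blk_lt l (j : 'I_(Mn l)) r : r < Qn l -> j * Qn l + r < Tn l.
Proof.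
move=> h; apply: (@leq_trans (j.+1 * Qn l)).
  by rewrite mulSnr ltn_add2l.
by rewrite /Tn leq_mul2r ltn_ord orbT.
Qed.

Lemma unit_lt l u t : u < Un l -> t < Pn l -> u * Pn l + t < Qn l.
Proof.
move=> hu ht; apply: (@leq_trans (u.+1 * Pn l)).
  by rewrite mulSnr ltn_add2l.
by rewrite /Qn leq_mul2r hu orbT.
Qed.

Lemma eX l r : r <= Tn l -> ~~ odd r -> eG (Xv l) (Lp l r).
Proof. by move=> h1 h2 /=; rewrite Lval. Qed.

Lemma eY l (j : 'I_(Mn l)) r : r < Qn l -> ~~ odd r ->
  eG (Yv j) (Lp l (j * Qn l + r)).
Proof.
move=> h1 h2 /=; rewrite Lval; last exact: ltnW (blk_lt j h1).
rewrite oddD oddM Qn_even andbF /= h2 /=.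
by rewrite divnMDl ?Qn_gt0 // divn_small // addn0.
Qed.

Lemma eL l r : r < Tn l -> eG (Lp l r) (Lp l r.+1).
Proof. by move=> h /=; rewrite !Lval // ?eqxx // ltnW. Qed.

Lemma win2 (a b c : nat) : a <= b + 1 -> b <= a + 1 -> c <= b + 1 -> b <= c + 1 ->
  a <= c + 2 /\ c <= a + 2.
Proof. lia. Qed.

Lemma win1 (a c : nat) : c <= a + 1 -> a <= c + 1 -> a <= c + 2 /\ c <= a + 2.
Proof. lia. Qed.

Lemma big_ineq K : 0 < K -> 5 * K < K.*2.+1 * K.+1.
Proof. move=> *; nia. Qed.

Section Main.
Variable l : nat.
Hypothesis l0 : 0 < l.
Variables (VH : finType) (eH : rel VH).
Hypothesis Hs : simple_graph eH.
Variable n : nat.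
Variable f : VG l -> (VH * 'I_n.+1) * 'I_l.
Hypothesis finj : injective f.
Hypothesis fhom : forall x y, eG x y ->
  strong (strong eH (@pathg n.+1)) (@complete l) (f x) (f y).

Definition phi v := (f v).1.1.
Definition psi v : nat := (f v).1.2.
Definition kap v := (f v).2.

Lemma edge_prop x y : eG x y ->
  (phi x = phi y \/ eH (phi x) (phi y)) /\ (psi x <= psi y + 1 /\ psi y <= psi x + 1).
Proof.
move/fhom; rewrite /phi /psi; case: (f x) => [[a i] k]; case: (f y) => [[b i'] k'].
rewrite /strong /= /pathg.
have H1 : (i.+1 == i' :> nat) || (i'.+1 == i :> nat) ->
   (i <= i' + 1 /\ i' <= i + 1) by case/orP => /eqP; lia.
case/or3P.
- by case/andP => /eqP [-> ->] _; split; [left | lia].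
- case/andP => _ /or3P [].
  + by case/andP => /eqP -> /H1 ?; split => //; left.
  + by case/andP => /eqP -> h; split; [right | lia].
  + by case/andP => h /H1 ?; split => //; right.
- case/andP => /or3P [] + _.
  + by case/andP => /eqP -> /H1 ?; split => //; left.
  + by case/andP => /eqP -> h; split; [right | lia].
  + by case/andP => h /H1 ?; split => //; right.
Qed.

Lemma adjH x y : eG x y -> phi x != phi y -> eH (phi x) (phi y).
Proof. by case/edge_prop => [[->|//] _]; rewrite eqxx. Qed.

Lemma window v : psi v <= psi (Xv l) + 2 /\ psi (Xv l) <= psi v + 2.
Proof.
have Q0 := Qn_gt0 l.
case: v => [[j|]|p].
- have e1 : eG (Yv j) (Lp l (j * Qn l + 0)) by apply: eY.
  have e2 : eG (Xv l) (Lp l (j * Qn l + 0)).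
    apply: eX; first by rewrite addn0 ltnW // -[X in X < _]addn0 blk_lt.
    by rewrite addn0 oddM Qn_even andbF.
  case: (edge_prop e1) => _ [h1 h2]; case: (edge_prop e2) => _ [h3 h4].
  exact: (win2 h1 h2 h3 h4).
- by split; apply: leq_addr.
- case/boolP: (odd p) => hp.
    have hp0 : 0 < p by case: (nat_of_ord p) hp.
    have hpT := ltn_ord p.
    have e1 : eG (Lp l p.-1) (inr p).
      have -> : inr p = Lp l p.-1.+1.
        by rewrite /Lp prednK ?inord_val.
      apply: eL; lia.
    have e2 : eG (Xv l) (Lp l p.-1).
      apply: eX; first lia.
      by move: hp; rewrite -{1}(prednK hp0) /=; case: (odd _).
    case: (edge_prop e1) => _ [h1 h2]; case: (edge_prop e2) => _ [h3 h4].
    exact: (win2 h2 h1 h3 h4).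
  have e : eG (Xv l) (inr p) by [].
  case: (edge_prop e) => _ [h1 h2]; exact: (win1 h1 h2).
Qed.

Lemma fiber (S : {set VG l}) (a : VH) :
  (forall v, v \in S -> phi v = a) -> #|S| <= Kn l.
Proof.
move=> hS.
pose h (v : VG l) : 'I_5 * 'I_l := (inord (psi v + 2 - psi (Xv l)), kap v).
have hinj : {in S &, injective h}.
  move=> v w vS wS [] e1 e2.
  have [ev1 ev2] := window v; have [ew1 ew2] := window w.
  move/(congr1 val): e1; rewrite /= !inordK; [|lia|lia] => e1.
  have hpsi : psi v = psi w by lia.
  apply: finj.
  move: (hS v vS) (hS w wS) hpsi e2; rewrite /phi /psi /kap.
  case: (f v) => [[a1 i1] k1]; case: (f w) => [[a2 i2] k2] /= -> -> /val_inj -> ->.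
  done.
rewrite -(card_in_imset hinj).
apply: leq_trans (max_card _) _.
by rewrite card_prod !card_ord.
Qed.

Lemma fiber_list (vals : seq VH) (S : {set VG l}) :
  (forall v, v \in S -> phi v \in vals) -> #|S| <= size vals * Kn l.
Proof.
elim: vals S => [|a vals IH] S hS.
  rewrite mul0n leqn0 cards_eq0; apply/eqP/setP => v; rewrite inE.
  by apply/negP => /hS.
rewrite -(cardsID [set v | phi v == a] S) mulSn.
apply: leq_add.
  by apply: fiber => v; rewrite !inE => /andP[_ /eqP ->].
have := IH (S :\: [set v | phi v == a]); apply => v.
by rewrite !inE => /andP[na /hS]; rewrite inE (negPf na).
Qed.

Lemma main_K4 : small_minor 2 (@complete 4) eH.
Proof.
have Q0 := Qn_gt0 l; have P0 := Pn_gt0 l.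
have [symH _] := Hs.
have K0 : 0 < Kn l by rewrite /Kn muln_gt0.
have [j hj] : exists j : 'I_(Mn l), phi (Yv j) != phi (Xv l).
  case/boolP: [exists j, phi (Yv j) != phi (Xv l)] => [/existsP//|/existsPn hall].
  exfalso.
  have := @fiber [set Yv j | j : 'I_(Mn l)] (phi (Xv l)).
  rewrite card_imset; last by move=> a b [].
  rewrite card_ord /Mn ltnn => h; suff : false by []; apply: h => v /imsetP[j' _ ->].
  by move: (hall j'); rewrite negbK => /eqP.
pose A := phi (Xv l); pose B := phi (Yv j).
pose Bad := [set v | (phi v == A) || (phi v == B)].
have cBad : #|Bad| <= 2 * Kn l.
  have := @fiber_list [:: A; B] Bad; apply => v.
  by rewrite !inE.
have posb r : r < Qn l -> j * Qn l + r <= Tn l.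
  by move=> h; apply: ltnW; apply: blk_lt.
have [u0 hu0 good] : exists2 u0, u0 < Un l &
    forall t, t < Pn l -> Lp l (j * Qn l + (u0 * Pn l + t)) \notin Bad.
  case/boolP: [exists u : 'I_(Un l), [forall t : 'I_(Pn l),
      Lp l (j * Qn l + (u * Pn l + t)) \notin Bad]].
    by case/existsP => u /forallP h; exists u => // t ht; exact: (h (Ordinal ht)).
  move/existsPn => hall; exfalso.
  have hex (u : 'I_(Un l)) :
      exists t : 'I_(Pn l), Lp l (j * Qn l + (u * Pn l + t)) \in Bad.
    by move: (hall u); rewrite negb_forall => /existsP[t]; rewrite negbK; exists t.
  have [g hg] := fin_all_exists hex.
  pose G (u : 'I_(Un l)) := Lp l (j * Qn l + (u * Pn l + g u)).
  have Ginj : injective G.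
    move=> u u' [] /(congr1 val); rewrite /= !inordK; first last.
    - by rewrite ltnS posb // unit_lt.
    - by rewrite ltnS posb // unit_lt.
    move/eqP; rewrite eqn_add2l => /eqP /(congr1 (fun x => x %/ Pn l)).
    rewrite /= !divnMDl // !divn_small // !addn0 => h; exact: val_inj.
  have := @subset_leq_card _ [set G u | u : 'I_(Un l)] Bad.
  rewrite card_imset // card_ord /Un.
  have -> : [set G u | u : 'I_(Un l)] \subset Bad.
    by apply/subsetP => x /imsetP[u _ ->]; apply: hg.
  move=> /(_ isT) h; move: (leq_trans h cBad); lia.
pose z k := Lp l (j * Qn l + (u0 * Pn l + k.*2)).
pose w k := Lp l (j * Qn l + (u0 * Pn l + k.*2.+1)).
have zlt k : k <= Kn l -> u0 * Pn l + k.*2 < Qn l.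
  by move=> hk; apply: unit_lt => //; rewrite /Pn; lia.
have wlt k : k <= Kn l -> u0 * Pn l + k.*2.+1 < Qn l.
  by move=> hk; apply: unit_lt => //; rewrite /Pn; lia.
have zgood k : k <= Kn l -> z k \notin Bad.
  by move=> hk; apply: good; rewrite /Pn; lia.
have wgood k : k <= Kn l -> w k \notin Bad.
  by move=> hk; apply: good; rewrite /Pn; lia.
have zeven k : ~~ odd (u0 * Pn l + k.*2).
  by rewrite oddD oddM Pn_even andbF odd_double.
have zX k : k <= Kn l -> eG (Xv l) (z k).
  move=> hk; apply: eX; first exact: posb (zlt _ hk).
  by rewrite oddD oddM Qn_even andbF /=.
have zY k : k <= Kn l -> eG (Yv j) (z k).
  by move=> hk; apply: eY => //; apply: zlt.
have zw k : k <= Kn l -> eG (z k) (w k).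
  move=> hk; rewrite /w addnS addnS; apply: eL.
  by apply: blk_lt; apply: zlt.
have wz k : k < Kn l -> eG (w k) (z k.+1).
  move=> hk; rewrite /z doubleS addnS addnS; apply: eL.
  by apply: blk_lt; apply: wlt; apply: ltnW.
have [k hk hne] : exists2 k, k < Kn l & phi (z k) != phi (z k.+1).
  case/boolP: [exists k : 'I_(Kn l), phi (z k) != phi (z k.+1)].
    by case/existsP => k h; exists k.
  move/existsPn => hall; exfalso.
  have eq0 : forall k, k <= Kn l -> phi (z k) = phi (z 0).
    elim => // k IH hk'.
    by move: (hall (Ordinal hk')); rewrite negbK => /eqP <-; apply: IH; apply: ltnW.
  have := @fiber [set z (val i) | i : 'I_(Kn l).+1] (phi (z 0)).
  rewrite card_imset; last first.
    move=> i i' [] /(congr1 val); rewrite /= !inordK; first last.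
    - by rewrite ltnS posb // zlt // -ltnS.
    - by rewrite ltnS posb // zlt // -ltnS.
    move/eqP; rewrite !eqn_add2l => /eqP /(can_inj doubleK) h; exact: val_inj.
  rewrite card_ord ltnn => h; suff : false by []; apply: h => v /imsetP[i _ ->].
  by apply: eq0; rewrite -ltnS ltn_ord.
have hk' : k <= Kn l by apply: ltnW.
pose s := phi (z k); pose s' := phi (z k.+1); pose c := phi (w k).
have nb v : v \notin Bad -> (phi v != A) && (phi v != B).
  by rewrite inE negb_or.
have /andP[sA sB] := nb _ (zgood k hk').
have /andP[s'A s'B] := nb _ (zgood k.+1 hk).
have /andP[cA cB] := nb _ (wgood k hk').
have eAs : eH A s by apply: adjH; [apply: zX | rewrite eq_sym].
have eBs : eH B s by apply: adjH; [apply: zY | rewrite eq_sym].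
have eAs' : eH A s' by apply: adjH; [apply: zX | rewrite eq_sym].
have eBs' : eH B s' by apply: adjH; [apply: zY | rewrite eq_sym].
have [ecs _] := edge_prop (zw k hk').
have [ecs' _] := edge_prop (wz k hk).
(* the third common neighbour *)
have QE : Qn l = (Un l * (Kn l).+1).*2 by rewrite /Qn /Pn -!muln2 mulnA.
have [i3 hi3] : exists i : 'I_(Un l * (Kn l).+1),
    phi (Lp l (j * Qn l + (val i).*2)) \notin [:: A; B; s; s'; c].
  case/boolP: [exists i : 'I_(Un l * (Kn l).+1),
     phi (Lp l (j * Qn l + (val i).*2)) \notin [:: A; B; s; s'; c]].
    by case/existsP => i h; exists i.
  move/existsPn => hall; exfalso.
  pose S3 := [set Lp l (j * Qn l + (val i).*2) | i : 'I_(Un l * (Kn l).+1)].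
  have hm : forall v, v \in S3 -> phi v \in [:: A; B; s; s'; c].
    by move=> v /imsetP[i _ ->]; move: (hall i); rewrite negbK.
  have := fiber_list hm; rewrite /S3 card_imset; last first.
    move=> i i' [] /(congr1 val); rewrite /= !inordK; first last.
    - by rewrite ltnS posb // QE ltn_double.
    - by rewrite ltnS posb // QE ltn_double.
    move/eqP; rewrite !eqn_add2l => /eqP /(can_inj doubleK) h; exact: val_inj.
  rewrite card_ord /= /Un => h.
  by have := leq_trans (big_ineq K0) h; rewrite ltnn.
pose z3 := Lp l (j * Qn l + (val i3).*2).
have i3lt : (val i3).*2 < Qn l by rewrite QE ltn_double ltn_ord.
have z3X : eG (Xv l) z3.
  apply: eX; first exact: posb.
  by rewrite oddD oddM Qn_even andbF odd_double.
have z3Y : eG (Yv j) z3 by apply: eY => //; rewrite odd_double.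
move: hi3; rewrite !inE !negb_or => /and5P[s3A s3B s3s s3s' s3c].
have eAs3 : eH A (phi z3) by apply: adjH; rewrite // eq_sym.
have eBs3 : eH B (phi z3) by apply: adjH; rewrite // eq_sym.
have AB : A != B by rewrite eq_sym.
have ecs0 : s = c \/ eH s c := ecs.
have ecs0' : c = s' \/ eH c s' := ecs'.
have ss' : s != s' := hne.
have As : A != s by rewrite eq_sym.
have Bs : B != s by rewrite eq_sym.
have As' : A != s' by rewrite eq_sym.
have Bs' : B != s' by rewrite eq_sym.
have Ac : A != c by rewrite eq_sym.
have Bc : B != c by rewrite eq_sym.
have As3 : A != phi z3 by rewrite eq_sym.
have Bs3 : B != phi z3 by rewrite eq_sym.
have ss3 : s != phi z3 by rewrite eq_sym.
have s's3 : s' != phi z3 by rewrite eq_sym.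
have cs3 : c != phi z3 by rewrite eq_sym.
have BA : B != A by rewrite eq_sym.
have s's : s' != s by rewrite eq_sym.
case/boolP: ((c == s) || (c == s')) => [hc|].
  have ess' : eH s s'.
    case/orP: hc => /eqP hc.
      case: ecs0' => [hh|]; first by move: ss'; rewrite -hc hh eqxx.
      by rewrite hc.
    case: ecs0 => [hh|]; first by move: ss'; rewrite -hc hh eqxx.
    by rewrite hc.
  apply: (@k4_build _ eH s s' A A B (phi z3)) => //; try by left.
  all: rewrite ?(eq_sym s3A) ?(eq_sym A) ?(eq_sym B) //.
  all: rewrite ?(symH s) ?(symH s') ?eAs ?eBs ?eAs' ?eBs' ?eAs3 ?orbT //.
move/norP => [cs cs'].
have ecs1 : eH c s.
  case: ecs0 => [hh|]; [by move: cs; rewrite hh eqxx | by rewrite symH].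
have ecs2 : eH c s' by case: ecs0' => // /eqP; rewrite (negPf cs').
have sc : s != c by rewrite eq_sym.
have s'c : s' != c by rewrite eq_sym.
apply: (@k4_build _ eH s A B (phi z3) s' c) => //; try by right.
all: rewrite ?(symH s) ?(symH s') ?eAs ?eBs ?eAs' ?eBs' ?eAs3 ?ecs1 ?ecs2 ?orbT //.
all: rewrite ?(eq_sym s3A) ?(eq_sym A) ?(eq_sym B) ?(eq_sym c) //.
Qed.

End Main.


Unset Implicit Arguments.

Theorem corollary13 (l : nat) : 0 < l ->
  exists (VG : finType) (eG : rel VG),
    [/\ simple_graph eG, bipartite eG, planar eG &
      forall (VH : finType) (eH : rel VH), simple_graph eH ->
      forall (n : nat) (f : VG -> (VH * 'I_n.+1) * 'I_l),
        injective f ->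
        (forall x y, eG x y ->
           strong (strong eH (@pathg n.+1)) (@complete l) (f x) (f y)) ->
        small_minor 2 (@complete 4) eH /\ treewidth_ge 3 eH].
Proof.
move=> l0.
exists (VG l), (@eG l); split.
- exact: eG_simple.
- exact: eG_bip.
- exact: G_planar.
move=> VH eH Hs n f finj fhom.
have K4 : small_minor 2 (@complete 4) eH by apply: (main_K4 l0 Hs finj fhom).
by split; [exact: K4 | exact: tw_of_K4].
Qed.
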